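(* Assume the Dickson--Hardy--Littlewood conjecture: every admissible tuple of natural numbers is prime-producing. Let $k \geq 1$. Then every good $k$-tuple $(p_1,\dots,p_k)$ can be extended to a good $(k+1)$-tuple $(p_1,\dots,p_k,p_{k+1})$.
   Context: A tuple $(h_1,\dots,h_k)$ of natural numbers is admissible if for every prime $p$ there is at least one residue class mod $p$ containing none of $h_1,\dots,h_k$. A tuple is prime-producing if there are infinitely many integers $n$ such that $n+h_1,\dots,n+h_k$ are all prime. A good $k$-tuple is an increasing $k$-tuple $(p_1,\dots,p_k)$ of primes with $3 < p_1 < \dots < p_k$ such that, for all $1 \le i < j \le k$, the number $p_i+p_j+1$ is prime and $p_i$ does not divide $p_j+2$. *)

(* Defs.v *)
From mathcomp Require Import all_boot.
Set Implicit Arguments. Unset Strict Implicit. Unset Printing Implicit Defensive.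

Definition admissible (h : seq nat) : Prop :=
  forall p : nat, prime p -> exists r : nat, r < p /\ forall x, x \in h -> x %% p != r.

(* prime-producing: infinitely many n with all n + h_i prime
   (stated as: for every bound N there is n >= N that works) *)
Definition prime_producing (h : seq nat) : Prop :=
  forall N : nat, exists n : nat, N <= n /\ forall x, x \in h -> prime (n + x).

Definition DHL : Prop := forall h : seq nat, admissible h -> prime_producing h.

Definition good_tuple (k : nat) (s : seq nat) : Prop :=
  size s = k /\
  (forall i, i < k -> prime (nth 0 s i)) /\
  (forall i, i < k -> 3 < nth 0 s i) /\
  (forall i j, i < j -> j < k -> nth 0 s i < nth 0 s j) /\
  (forall i j, i < j -> j < k ->
     prime (nth 0 s i + nth 0 s j + 1) /\ ~~ (nth 0 s i %| nth 0 s j + 2)).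

(* Main.v *)
Require Import Defs.
From mathcomp Require Import all_boot.
From mathcomp Require Import zify.

Lemma good_facts k s : good_tuple k s ->
  (forall y, y \in s -> prime y /\ 3 < y) /\
  (forall y z, y \in s -> z \in s -> y != z -> prime (y + z + 1)) /\
  (forall y z, y \in s -> z \in s -> y < z -> ~~ (y %| z + 2)).
Proof.
move=> [Hsz [Hp [H3 [Hinc Hpair]]]].
split; [|split].
- move=> y /(nthP 0) [i Hi <-]; rewrite Hsz in Hi; split; [exact: Hp|exact: H3].
- move=> y z /(nthP 0) [i Hi <-] /(nthP 0) [j Hj <-] Hne; rewrite Hsz in Hi Hj.
  case: (ltngtP i j) => Hij.
  + by have [] := Hpair i j Hij Hj.
  + have [P _] := Hpair j i Hij Hi; by rewrite (addnC (nth 0 s i)).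
  + by rewrite Hij eqxx in Hne.
- move=> y z /(nthP 0) [i Hi <-] /(nthP 0) [j Hj <-] Hlt; rewrite Hsz in Hi Hj.
  case: (ltngtP i j) => Hij.
  + by have [] := Hpair i j Hij Hj.
  + by have := ltn_trans (Hinc j i Hij Hi) Hlt; rewrite ltnn.
  + by move: Hlt; rewrite Hij ltnn.
Qed.

Lemma le_sumn s y : y \in s -> y <= sumn s.
Proof.
elim: s => //= a s IH; rewrite inE => /orP [/eqP ->|/IH]; lia.
Qed.

Lemma prime_eq_of_dvd q P : prime q -> prime P -> q %| P -> q = P.
Proof. by move=> Hq HP; rewrite dvdn_prime2 // => /eqP. Qed.

Theorem mainTheorem2 (k : nat) (s : seq nat) :
  DHL -> 1 <= k -> good_tuple k s ->
  exists p : nat, good_tuple k.+1 (rcons s p).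
Proof.
move=> Hdhl Hk Hg.
have [F1 [F2 F3]] := @good_facts k s Hg.
set h := [:: 0, 2 & map succn s].
have memh : forall x, x \in h -> x = 0 \/ x = 2 \/ exists2 y, y \in s & x = y.+1.
  move=> x; rewrite !inE => /orP [/eqP->|/orP [/eqP->|/mapP [y Hy ->]]]; auto.
  by right; right; exists y.
have Hadm : admissible h.
  move=> q Hq.
  have q2 : 1 < q by exact: prime_gt1.
  case: (boolP (q \in s)) => Hqs.
  - have [_ q3] := F1 q Hqs.
    case: (eqVneq q 5) => Hq5.
    + subst q; exists 4; split => // x /memh [->|[->|[y Hy ->]]] //.
      apply/negP => /eqP Hm.
      have [Py y3] := F1 y Hy.
      have Hd : 5 %| y + 2.
        have := divn_eq y.+1 5; rewrite Hm => E.
        apply/dvdnP; exists (y.+1 %/ 5).+1; lia.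
      case: (eqVneq y 5) => Hy5; first by subst y.
      have y5 : 5 < y.
        have : y != 4 by apply/eqP => E; subst y.
        lia.
      by have := F3 5 y Hqs Hy y5; rewrite Hd.
    + have q6 : 6 <= q.
        have : q != 4 by apply/eqP => E; subst q.
        lia.
      case: (boolP (has (fun y => y.+1 %% q == 3) s)) => H3.
      * exists (q - 2); split; first lia.
        move=> x /memh [->|[->|[z Hz ->]]].
        -- rewrite mod0n; lia.
        -- rewrite modn_small //; lia.
        -- apply/negP => /eqP Hz3.
           move/hasP: H3 => [y Hy /eqP Hy3].
           have Hne : y != z.
             apply/eqP => E; subst z; lia.
           have Hd : q %| y + z + 1.
             have := divn_eq y.+1 q; have := divn_eq z.+1 q.
             rewrite Hy3 Hz3 => E1 E2.
             apply/dvdnP; exists (y.+1 %/ q + z.+1 %/ q).+1. nia.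
           have E := @prime_eq_of_dvd _ _ Hq (F2 y z Hy Hz Hne) Hd.
           have [_ y3] := F1 y Hy; have [_ z3] := F1 z Hz.
           move: Hy3; rewrite modn_small; lia.
      * exists 3; split; first lia.
        move=> x /memh [->|[->|[z Hz ->]]].
        -- by rewrite mod0n.
        -- rewrite modn_small //; lia.
        -- apply/negP => Hz3; move/hasP: H3; apply; by exists z.
  - exists 1; split => // x /memh [->|[->|[y Hy ->]]].
    + by rewrite mod0n.
    + case: (eqVneq q 2) => [->//|Hq2]; rewrite modn_small //; lia.
    + apply/negP => /eqP Hm.
      have [Py _] := F1 y Hy.
      have Hd : q %| y.
        have := divn_eq y.+1 q; rewrite Hm => E.
        apply/dvdnP; exists (y.+1 %/ q); lia.
      have E := @prime_eq_of_dvd _ _ Hq Py Hd; subst y.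
      by rewrite Hy in Hqs.
have [n [Hn Hpr]] := Hdhl h Hadm (sumn s).+1.
have Pn : prime n by have := Hpr 0; rewrite addn0; apply; rewrite inE.
have Pn2 : prime (n + 2) by apply: Hpr; rewrite !inE.
have Pny : forall y, y \in s -> prime (y + n + 1).
  move=> y Hy; have -> : y + n + 1 = n + y.+1 by lia. apply: Hpr.
  by rewrite !inE; apply/orP; right; apply/orP; right; apply/mapP; exists y.
have Bnd : forall y, y \in s -> y < n.
  move=> y Hy; have := @le_sumn _ _ Hy; lia.
move: Hg => [Hsz [Hp [H3 [Hinc Hpair]]]].
exists n; rewrite /good_tuple size_rcons Hsz; split => //.
have Hnth : forall i, i < k.+1 -> nth 0 (rcons s n) i = if i < k then nth 0 s i else n.
  move=> i Hi; rewrite nth_rcons Hsz; case: ltnP => // Hik.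
  by have -> : i == k by lia.
have Mem : forall i, i < k -> nth 0 s i \in s.
  by move=> i Hi; apply: mem_nth; rewrite Hsz.
split; [|split; [|split]].
- move=> i Hi; rewrite Hnth //; case: ifP => // Hik; exact: Hp.
- move=> i Hi; rewrite Hnth //; case: ifP => Hik; first exact: H3.
  have := Bnd _ (Mem 0 Hk); have := H3 0 Hk; lia.
- move=> i j Hij Hj; rewrite !Hnth //; last lia.
  have Hik : i < k by lia.
  rewrite Hik; case: ifP => Hjk; first exact: Hinc.
  exact: Bnd _ (Mem i Hik).
- move=> i j Hij Hj; rewrite !Hnth //; last lia.
  have Hik : i < k by lia.
  rewrite Hik; case: ifP => Hjk; first exact: Hpair.
  have Hy := Mem i Hik; split; first exact: Pny.
  apply/negP => Hd.
  have [Py y3] := F1 _ Hy.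
  have E := @prime_eq_of_dvd _ _ Py Pn2 Hd.
  have := Bnd _ Hy; lia.
Qed.
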